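(* Let $\mathcal V=\{1,\dots,V\}$, $L\ge2$, integers $1\le K<V$, distinct positions $l_1,l_2\in\{1,\dots,L\}$, $\rho\in(0,1)$ with $\rho K\in\mathbb N$, $\mu=\rho/(1-\rho)$, $a\in[\rho,1]$, $b=\mu(1-a)$, and $\epsilon\in[0,1/2]$. Let $P$ be the distribution on $\mathcal V^L$ with $P(\mathbf x)=\prod_{l=1}^L P(x_l\mid\mathbf x_{<l})$, where for every $l$ and every context $\mathbf x_{<l}$, $P(\cdot\mid\mathbf x_{<l})$ is uniform on a set $\mathcal S(\mathbf x_{<l})\subset\mathcal V$ of size $K$, with $\mathcal S(\mathbf x_{<l_1})=\{1,\dots,K\}$ for all contexts at position $l_1$. Let $Q$ be the autoregressive distribution whose conditionals equal those of $P$ at every position $l\notin\{l_1,l_2\}$ and every context, and for every context satisfy $$Q(x\mid\mathbf x_{<l_1})=\begin{cases}\frac{a}{\rho K}& x\in\{1,\dots,\rho K\}\\ \frac{b}{\rho K}& x\in\{\rho K+1,\dots,K\}\\ 0&\text{otherwise,}\end{cases}\qquad Q(x\mid\mathbf x_{<l_2})=\begin{cases}\frac{1-\epsilon}{K}& x\in\mathcal S(\mathbf x_{<l_2})\\ \frac{\epsilon}{V-K}&\text{otherwise.}\end{cases}$$ For $t>0$ let $\tau=1/t$ and let $Q^t$ be the tempered distribution $Q^t(\mathbf x)=\prod_{l}Q(x_l\mid\mathbf x_{<l})^{\tau}/\sum_{y\in\mathcal V}Q(y\mid\mathbf x_{<l})^{\tau}$ (with $0^\tau=0$). Set $$F=\frac{(1-\epsilon)^{\tau}}{(1-\epsilon)^{\tau}+(V/K-1)^{1-\tau}\epsilon^{\tau}},\quad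 \lambda^t_{\min}=\frac{1}{1-\rho}\,\frac{(1-a)^{\tau}}{(1-a)^{\tau}+\mu^{1-\tau}a^{\tau}}\,F,\quad \lambda^t_{\max}=\frac{\mu^{-\tau}}{1-\rho}\,\frac{a^{\tau}}{(1-a)^{\tau}+\mu^{1-\tau}a^{\tau}}\,F.$$ Then: (i) for all $\lambda\ge\lambda^t_{\max}$: $\alpha_\lambda(P\Vert Q^t)=F$ and $\beta_\lambda(P\Vert Q^t)=F/\lambda$; (ii) for all $\lambda\in[\lambda^t_{\min},\lambda^t_{\max}]$ with $\lambda>0$: $\alpha_\lambda(P\Vert Q^t)=\rho\lambda+\frac{(1-a)^{\tau}}{(1-a)^{\tau}+\mu^{1-\tau}a^{\tau}}F$ and $\beta_\lambda(P\Vert Q^t)=\rho+\frac1\lambda\frac{(1-a)^{\tau}}{(1-a)^{\tau}+\mu^{1-\tau}a^{\tau}}F$; (iii) for all $0<\lambda\le\lambda^t_{\min}$: $\alpha_\lambda(P\Vert Q^t)=\lambda$ and $\beta_\lambda(P\Vert Q^t)=1$.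
   Context: For distributions $P,Q$ on $\mathcal V^L$ and $\lambda>0$: $\alpha_\lambda(P\Vert Q)=\sum_{\mathbf x}\min(\lambda P(\mathbf x),Q(\mathbf x))$ (Precision) and $\beta_\lambda(P\Vert Q)=\sum_{\mathbf x}\min(P(\mathbf x),Q(\mathbf x)/\lambda)$ (Recall). $\mathbf x_{<l}=(x_1,\dots,x_{l-1})$. Note that $b=\mu(1-a)$ is exactly the value making $Q(\cdot\mid\mathbf x_{<l_1})$ sum to one. *)

(* Defs.v *)
(* + MathComp-Analysis (for real powers powR, with 0 `^ t = 0 for t > 0). *)
From mathcomp Require Import all_boot all_order all_algebra.
From mathcomp Require Import reals exp.
Set Implicit Arguments. Unset Strict Implicit. Unset Printing Implicit Defensive.
Import Order.TTheory GRing.Theory Num.Theory.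
Local Open Scope ring_scope.

(* Vocabulary 'I_V (token v : 'I_V stands for v+1 in the paper's {1,..,V}).
   Sequences are L.-tuple 'I_V; position l (0-indexed, l : 'I_L) has context
   x_{<l} = take l x, a seq of length l. *)

Definition autoreg (R : realType) (V L : nat) (cond : seq 'I_V -> 'I_V -> R)
  (x : L.-tuple 'I_V) : R :=
  \prod_(i < L) cond (take i x) (tnth x i).

Definition temper (R : realType) (V : nat) (tau : R) (cond : seq 'I_V -> 'I_V -> R)
  (c : seq 'I_V) (x : 'I_V) : R :=
  cond c x `^ tau / \sum_(y : 'I_V) cond c y `^ tau.

(* Precision alpha_lambda(P || Q) and Recall beta_lambda(P || Q) *)
Definition precision (R : realType) (T : finType) (lam : R) (P Q : T -> R) : R :=
  \sum_(x : T) Num.min (lam * P x) (Q x).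
Definition recall (R : realType) (T : finType) (lam : R) (P Q : T -> R) : R :=
  \sum_(x : T) Num.min (P x) (Q x / lam).

Definition mu_of (R : realType) (rho : R) : R := rho / (1 - rho).

Definition Fconst (R : realType) (V K : nat) (eps tau : R) : R :=
  (1 - eps) `^ tau /
  ((1 - eps) `^ tau + (V%:R / K%:R - 1) `^ (1 - tau) * eps `^ tau).

Definition Gconst (R : realType) (rho a tau : R) : R :=
  (1 - a) `^ tau / ((1 - a) `^ tau + mu_of rho `^ (1 - tau) * a `^ tau).

Definition lam_min (R : realType) (V K : nat) (rho a eps tau : R) : R :=
  (1 - rho)^-1 * Gconst rho a tau * Fconst V K eps tau.

Definition lam_max (R : realType) (V K : nat) (rho a eps tau : R) : R :=
  mu_of rho `^ (- tau) / (1 - rho) *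
  (a `^ tau / ((1 - a) `^ tau + mu_of rho `^ (1 - tau) * a `^ tau)) *
  Fconst V K eps tau.

(* Main.v *)
Require Import Defs.
From mathcomp Require Import all_boot all_order all_algebra.
From mathcomp Require Import reals exp.
From mathcomp Require Import ring lra.
Import Order.TTheory GRing.Theory Num.Theory.
Local Open Scope ring_scope.

Lemma sum_tuple_cons (R : realType) (T : finType) n (F : n.+1.-tuple T -> R) :
  \sum_(x : n.+1.-tuple T) F x = \sum_(y : T) \sum_(x : n.-tuple T) F [tuple of y :: x].
Proof.
rewrite pair_big /=.
rewrite (reindex (fun p : T * n.-tuple T => [tuple of p.1 :: p.2])) //=.
exists (fun x : n.+1.-tuple T => (thead x, [tuple of behead x])).
  by case=> y x _ /=; rewrite theadE; congr pair; apply: val_inj.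
by move=> x _; rewrite [in RHS](tuple_eta x).
Qed.

Lemma autoreg_cons (R : realType) V n (cond : seq 'I_V -> 'I_V -> R) y (x : n.-tuple 'I_V) :
  autoreg cond [tuple of y :: x] = cond [::] y * autoreg (fun c => cond (y :: c)) x.
Proof.
rewrite /autoreg big_ord_recl /=; congr (_ * _).
by apply: eq_bigr => i _; rewrite tnthS.
Qed.

Lemma mass (R : realType) V n (cond : seq 'I_V -> 'I_V -> R) :
  (forall c, (size c < n)%N -> \sum_y cond c y = 1) ->
  \sum_(x : n.-tuple 'I_V) autoreg cond x = 1.
Proof.
elim: n cond => [|n IH] cond H.
  rewrite (big_pred1 [tuple]) /=; first by rewrite /autoreg big_ord0.
  by move=> x; symmetry; apply/eqP; exact: tuple0.
rewrite sum_tuple_cons -[RHS](H [::]) //.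
apply: eq_bigr => y _.
under eq_bigr => x _ do rewrite autoreg_cons.
by rewrite -mulr_sumr IH ?mulr1 // => c hc; apply: H.
Qed.

Lemma marg (R : realType) V n (cond : seq 'I_V -> 'I_V -> R) (l : nat) (x0 : 'I_V)
  (p g : 'I_V -> R) :
  (forall c, (size c < n)%N -> \sum_y cond c y = 1) ->
  (forall c y, size c = l -> cond c y = p y) -> (l < n)%N ->
  \sum_(x : n.-tuple 'I_V) autoreg cond x * g (nth x0 x l) = \sum_v p v * g v.
Proof.
elim: n cond l => [|n IH] cond l H Hp Hl //.
rewrite sum_tuple_cons.
case: l Hp Hl => [|l] Hp Hl.
  apply: eq_bigr => y _.
  under eq_bigr => x _ do rewrite autoreg_cons /= mulrAC.
  by rewrite -mulr_sumr mass ?mulr1 ?(Hp [::] y) // => c hc; apply: H.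
rewrite -[RHS]mul1r -(H [::]) // mulr_suml.
apply: eq_bigr => y _.
under eq_bigr => x _ do rewrite autoreg_cons /= -mulrA.
rewrite -mulr_sumr (IH _ l) //.
- by move=> c hc; apply: H.
- by move=> c z hc; apply: Hp => /=; rewrite hc.
Qed.

Lemma sumS (R : realType) V (A : {set 'I_V}) (al be : R) :
  \sum_(y : 'I_V) (if y \in A then al else be) = #|A|%:R * al + (V - #|A|)%:R * be.
Proof.
rewrite (bigID (fun y => y \in A)) /=.
rewrite (eq_bigr (fun _ => al)); last by move=> i ->.
rewrite [X in _ + X](eq_bigr (fun _ => be)); last by move=> i /negbTE ->.
rewrite !sumr_const -[al *+ _]mulr_natl -[be *+ _]mulr_natl.
congr (_ + _ * _); congr (_%:R).
have := cardC A; rewrite card_ord => h.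
have h3 : forall a b v : nat, (a + b)%N = v -> b = (v - a)%N by move=> a b v <-; rewrite addKn.
exact: h3 h.
Qed.

Lemma sum3 (R : realType) V (rK K : nat) (al be : R) : (rK <= K <= V)%N ->
  \sum_(y < V) (if (y < rK)%N then al else if (y < K)%N then be else 0)
  = rK%:R * al + (K - rK)%:R * be.
Proof.
move=> /andP[h1 h2].
rewrite -(big_mkord xpredT (fun y => if (y < rK)%N then al else if (y < K)%N then be else 0)).
rewrite (big_cat_nat (leq0n rK) (leq_trans h1 h2)) /=.
rewrite (big_cat_nat h1 h2) /=.
rewrite (@eq_big_nat _ _ _ 0 rK _ (fun _ => al)); last by move=> i /andP[_ ->].
rewrite (@eq_big_nat _ _ _ rK K _ (fun _ => be)); last first.
  by move=> i /andP[hi ->]; rewrite ltnNge hi.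
rewrite (@eq_big_nat _ _ _ K V _ (fun _ => 0)); last first.
  by move=> i /andP[hi _]; rewrite ltnNge (leq_trans h1 hi) /= ltnNge hi.
rewrite !sumr_const_nat mul0rn addr0 subn0.
by rewrite -[al *+ _]mulr_natl -[be *+ _]mulr_natl.
Qed.

Lemma powRV (R : realType) (y t : R) : 0 <= y -> (y^-1) `^ t = (y `^ t)^-1.
Proof. by move=> hy; rewrite -powR_inv1 // -powRrM mulN1r powRN. Qed.

Lemma powRdiv (R : realType) (x y t : R) : 0 <= x -> 0 <= y -> (x / y) `^ t = x `^ t / y `^ t.
Proof. by move=> hx hy; rewrite powRM ?invr_ge0 // powRV. Qed.

Lemma powR1m (R : realType) (x t : R) : 0 < x -> x `^ (1 - t) = x / x `^ t.
Proof.
move=> hx; rewrite powRB ?powRr1 ?ltW //.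
by apply/implyP => _; rewrite gt_eqF.
Qed.

Lemma G2 (R : realType) (k m e tau : R) : 0 < k -> 0 < m -> 0 <= e < 1 ->
  ((1-e)/k) `^ tau / (k * ((1-e)/k) `^ tau + m * (e/m) `^ tau) =
  k^-1 * ((1-e) `^ tau / ((1-e) `^ tau + (m/k) `^ (1-tau) * e `^ tau)).
Proof.
move=> hk hm /andP[he0 he1].
have h1e : 0 < 1 - e by lra.
rewrite !powRdiv ?(ltW hk) ?(ltW hm) ?(ltW h1e) //. rewrite (@powR1m _ m tau hm) (@powR1m _ k tau hk).
have kt : 0 < k `^ tau by apply: powR_gt0.
have mt : 0 < m `^ tau by apply: powR_gt0.
have at0 : 0 < (1 - e) `^ tau by apply: powR_gt0.
have bt : 0 <= e `^ tau by apply: powR_ge0.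
set K := k `^ tau in kt *; set M := m `^ tau in mt *; set A := (1 - e) `^ tau in at0 *;
set B := e `^ tau in bt *.
have d : 0 < A * (M * k) + m * K * B.
  exact: ltr_wpDr (mulr_ge0 (mulr_ge0 (ltW hm) (ltW kt)) bt) (mulr_gt0 at0 (mulr_gt0 mt hk)).
field; by rewrite !gt_eqF.
Qed.

Lemma G3 (R : realType) (rho k a tau : R) : 0 < rho < 1 -> 0 < k -> rho <= a <= 1 ->
  let Dq := (rho*k) * (a/(rho*k)) `^ tau + (k - rho*k) * (mu_of rho * (1-a)/(rho*k)) `^ tau in
  (a/(rho*k)) `^ tau / Dq = k^-1 * ((1 - Gconst rho a tau)/rho) /\
  (mu_of rho * (1-a)/(rho*k)) `^ tau / Dq = k^-1 * (Gconst rho a tau/(1-rho)).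
Proof.
move=> /andP[r0 r1] hk /andP[ra a1] Dq.
have a0 : 0 < a by lra.
have mu0 : 0 < mu_of rho by rewrite /mu_of; apply: divr_gt0; lra.
have rk0 : 0 < rho * k by apply: mulr_gt0.
have b0 : 0 <= 1 - a by lra.
rewrite /Dq /Gconst.
have hmu : mu_of rho = rho / (1 - rho) by [].
move: mu0 hmu; move: (mu_of rho) => mu mu0 hmu.
rewrite [mu `^ _](@powR1m _ mu tau mu0).
rewrite !powRdiv ?(ltW a0) ?(ltW rk0) ?(mulr_ge0 (ltW mu0) b0) //.
rewrite [(mu * _) `^ _]powRM ?(ltW mu0) //.
have Mt : 0 < mu `^ tau by apply: powR_gt0.
have At : 0 < a `^ tau by apply: powR_gt0.
have Kt : 0 < (rho * k) `^ tau by apply: powR_gt0.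
have Bt : 0 <= (1 - a) `^ tau by apply: powR_ge0.
move: Mt At Kt Bt.
set M := mu `^ tau; set A := a `^ tau; set K := (rho * k) `^ tau; set B := (1 - a) `^ tau.
move=> Mt At Kt Bt.
rewrite hmu.
have r1' : 0 < 1 - rho by lra.
have kr : 0 < k - rho * k by nra.
have d1 : 0 < B * ((1 - rho) * M) + rho * A.
  exact: ltr_wpDl (mulr_ge0 Bt (ltW (mulr_gt0 r1' Mt))) (mulr_gt0 r0 At).
have d2 : 0 < rho * k * A + (k - rho * k) * (M * B).
  exact: ltr_wpDr (mulr_ge0 (ltW kr) (mulr_ge0 (ltW Mt) Bt)) (mulr_gt0 rk0 At).
split; field; by rewrite !gt_eqF.
Qed.

Lemma consts (R : realType) V K (rho a eps tau : R) : 0 < rho < 1 -> rho <= a <= 1 ->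
  0 < tau -> 0 <= Fconst V K eps tau ->
  let F := Fconst V K eps tau in let G := Gconst rho a tau in
  let lmax := lam_max V K rho a eps tau in let lmin := lam_min V K rho a eps tau in
  [/\ F * ((1 - G)/rho) = lmax, F * (G/(1-rho)) = lmin, lmin <= lmax &
      rho * lmax + (1 - rho) * lmin = F].
Proof.
move=> /andP[r0 r1] /andP[ra a1] t0 F0 F G lmax lmin.
have a0 : 0 < a by lra.
have mu0 : 0 < mu_of rho by rewrite /mu_of; apply: divr_gt0; lra.
have b0 : 0 <= 1 - a by lra.
have hmu : mu_of rho = rho / (1 - rho) by [].
have Hle : (mu_of rho * (1 - a)) `^ tau <= a `^ tau.
  apply: ge0_ler_powR; [exact: ltW t0 | rewrite nnegrE; exact: mulr_ge0 (ltW mu0) b0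
    | rewrite nnegrE; exact: ltW a0 | ].
  rewrite hmu mulrAC ler_pdivrMr; last by lra.
  nra.
rewrite powRM ?(ltW mu0) // in Hle.
rewrite /lmax /lmin /lam_max /lam_min -/F /G /Gconst.
move: mu0 hmu Hle; move: (mu_of rho) => mu mu0 hmu Hle.
rewrite [mu `^ (1 - _)](@powR1m _ mu tau mu0) powRN.
have Mt : 0 < mu `^ tau by apply: powR_gt0.
have At : 0 < a `^ tau by apply: powR_gt0.
have Bt : 0 <= (1 - a) `^ tau by apply: powR_ge0.
move: Mt At Bt Hle.
set M := mu `^ tau; set A := a `^ tau; set B := (1 - a) `^ tau.
move=> Mt At Bt Hle.
have r1' : 0 < 1 - rho by lra.
have D : 0 < B + mu / M * A.
  exact: ltr_wpDl Bt (mulr_gt0 (divr_gt0 mu0 Mt) At).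
rewrite hmu in D *.
have D' : 0 < B * ((1 - rho) * M) + rho * A.
  exact: ltr_wpDl (mulr_ge0 Bt (ltW (mulr_gt0 r1' Mt))) (mulr_gt0 r0 At).
set Dd := B + rho / (1 - rho) / M * A in D *.
split.
- by rewrite /Dd; field; rewrite !gt_eqF.
- by rewrite /Dd; field; rewrite !gt_eqF.
- have e1 : (1 - rho)^-1 * (B / Dd) * F = (F / ((1 - rho) * Dd)) * B.
    by field; rewrite !gt_eqF.
  have e2 : M^-1 / (1 - rho) * (A / Dd) * F = (F / ((1 - rho) * Dd)) * (A / M).
    by field; rewrite !gt_eqF.
  rewrite e1 e2; apply: ler_wpM2l.
    by apply: divr_ge0 => //; apply: ltW; apply: mulr_gt0.
  by rewrite ler_pdivlMr // mulrC.
- by rewrite /Dd; field; rewrite !gt_eqF.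
Qed.

Theorem propositionA2 (R : realType) (V L K rK : nat) (l1 l2 : 'I_L)
    (rho a eps : R)
    (S : seq 'I_V -> {set 'I_V})
    (Pc Qc : seq 'I_V -> 'I_V -> R) :
  (2 <= L)%N -> (1 <= K)%N -> (K < V)%N -> l1 != l2 ->
  0 < rho < 1 -> rho * K%:R = rK%:R ->
  rho <= a <= 1 -> 0 <= eps <= 1 / 2 ->
  (* P: uniform conditionals on sets S(c) of size K *)
  (forall c : seq 'I_V, (size c < L)%N -> #|S c| = K) ->
  (forall c : seq 'I_V, size c = l1 -> S c = [set x : 'I_V | (x < K)%N]) ->
  (forall (c : seq 'I_V) (x : 'I_V), (size c < L)%N ->
     Pc c x = if x \in S c then K%:R^-1 else 0) ->
  (* Q: equal to P off positions l1, l2 *)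
  (forall (c : seq 'I_V) (x : 'I_V), (size c < L)%N ->
     size c != l1 -> size c != l2 -> Qc c x = Pc c x) ->
  (forall (c : seq 'I_V) (x : 'I_V), size c = l1 ->
     Qc c x = if (x < rK)%N then a / rK%:R
              else if (x < K)%N then mu_of rho * (1 - a) / rK%:R
              else 0) ->
  (forall (c : seq 'I_V) (x : 'I_V), size c = l2 ->
     Qc c x = if x \in S c then (1 - eps) / K%:R
              else eps / (V - K)%:R) ->
  forall t : R, 0 < t ->
  let tau := t^-1 in
  let P := autoreg (L:=L) Pc in
  let Qt := autoreg (L:=L) (temper tau Qc) in
  let F := Fconst V K eps tau in
  let G := Gconst rho a tau in
  let lmin := lam_min V K rho a eps tau in
  let lmax := lam_max V K rho a eps tau in
  (forall lam : R, lmax <= lam ->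
     precision lam P Qt = F /\ recall lam P Qt = F / lam) /\
  (forall lam : R, lmin <= lam <= lmax -> 0 < lam ->
     precision lam P Qt = rho * lam + G * F /\
     recall lam P Qt = rho + lam^-1 * (G * F)) /\
  (forall lam : R, 0 < lam -> lam <= lmin ->
     precision lam P Qt = lam /\ recall lam P Qt = 1).
Proof.
move=> HL HK HKV hl12 /andP[r0 r1] hrK /andP[ra a1] /andP[e0 e1] HS HS1 HP HQ HQ1 HQ2
  t t0 tau P Qt F G lmin lmax.
have tau0 : 0 < tau by rewrite invr_gt0.
have tauN0 : tau != 0 by rewrite gt_eqF.
have K0 : (0 : R) < K%:R by rewrite ltr0n.
have V0 : (0 < V)%N by apply: leq_ltn_trans (leq0n K) HKV.
have VK0 : (0 : R) < (V - K)%:R by rewrite ltr0n subn_gt0.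
have rKK : (rK <= K)%N.
  rewrite -(ler_nat R) -hrK; apply: ltW; rewrite -[X in _ < X]mul1r ltr_pM2r //.
have rKV : (rK <= K <= V)%N by rewrite rKK ltnW.
have hKrK : (K - rK)%:R = K%:R - rho * K%:R by rewrite natrB // hrK.
have F0 : 0 < F.
  rewrite /F /Fconst; apply: divr_gt0; first by apply: powR_gt0; lra.
  apply: ltr_wpDr; first by apply: mulr_ge0; apply: powR_ge0.
  by apply: powR_gt0; lra.
have hr : 0 < rho < 1 by rewrite r0 r1.
have ha : rho <= a <= 1 by rewrite ra a1.
have [Emax Emin Hle Esum] := @consts R V K rho a eps tau hr ha tau0 (ltW F0).
rewrite -/F -/G -/lmax -/lmin in Emax Emin Hle Esum.
have Hrec : forall lam, 0 < lam -> recall lam P Qt = precision lam P Qt / lam.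
  move=> lam l0; rewrite /recall /precision mulr_suml; apply: eq_bigr => x _.
  by rewrite minr_pMl ?invr_ge0 ?(ltW l0) // mulrAC mulfV ?gt_eqF // mul1r.
have Hkey : forall lam, 0 < lam ->
    precision lam P Qt = rho * Num.min lam lmax + (1 - rho) * Num.min lam lmin.
  move=> lam l0.
  pose m1 := fun v : 'I_V => if (v < rK)%N then (1 - G) / rho else G / (1 - rho).
  pose mfac := fun (i : 'I_L) (v : 'I_V) => if i == l1 then m1 v else if i == l2 then F else 1.
  have x0 : 'I_V := Ordinal V0.
  have Hsz : forall (x : L.-tuple 'I_V) (i : 'I_L), size (take i x) = i.
    by move=> x i; rewrite size_take size_tuple ltn_ord.
  have Tge0 : forall c y, 0 <= temper tau Qc c y.
    move=> c y; rewrite /temper; apply: divr_ge0; first exact: powR_ge0.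
    by apply: sumr_ge0 => ? _; apply: powR_ge0.
  have Hfac : forall (c : seq 'I_V) (i : 'I_L) y, size c = i -> y \in S c ->
      temper tau Qc c y = K%:R^-1 * mfac i y.
    move=> c i y hc hy; have hcL : (size c < L)%N by rewrite hc ltn_ord.
    rewrite /temper /mfac.
    case: (eqVneq i l1) => [ei | n1].
      have hc1 : size c = l1 by rewrite hc ei.
      rewrite (HQ1 c y hc1).
      rewrite (eq_bigr (fun v : 'I_V => if (v < rK)%N then (a / rK%:R) `^ tau
          else if (v < K)%N then (mu_of rho * (1 - a) / rK%:R) `^ tau else 0)); last first.
        by move=> v _; rewrite (HQ1 c v hc1); case: ifP => //; case: ifP => // _ _; rewrite powR0.
      rewrite sum3 // -hrK hKrK.
      move: hy; rewrite HS1 // inE => hy.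
      have [g1 g2] := @G3 R rho K%:R a tau hr K0 ha.
      rewrite /m1; case hv1 : (y < rK)%N; first exact: g1.
      by rewrite hy; exact: g2.

    case: (eqVneq i l2) => [ei2 | n2].
      have hc2 : size c = l2 by rewrite hc ei2.
      rewrite (HQ2 c y hc2) hy.
      rewrite (eq_bigr (fun v : 'I_V => if v \in S c then ((1 - eps) / K%:R) `^ tau
          else (eps / (V - K)%:R) `^ tau)); last first.
        by move=> v _; rewrite (HQ2 c v hc2); case: ifP.
      have he : 0 <= eps < 1 by rewrite e0 /=; lra.
      rewrite sumS HS // (@G2 R K%:R (V - K)%:R eps tau K0 VK0 he).
      have hvk : (V - K)%:R / K%:R = V%:R / K%:R - 1 :> R.
        by rewrite (natrB _ (ltnW HKV)); field; rewrite gt_eqF.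
      by rewrite hvk.

    have hn1 : size c != l1 by rewrite hc.
    have hn2 : size c != l2 by rewrite hc.
    rewrite (HQ c y hcL hn1 hn2) (HP c y hcL) hy.
    rewrite (eq_bigr (fun v : 'I_V => if v \in S c then (K%:R^-1) `^ tau else 0)); last first.
      by move=> v _; rewrite (HQ c v hcL hn1 hn2) (HP c v hcL); case: ifP => // _; rewrite powR0.
    rewrite sumS HS // mulr0 addr0.
    have kt : 0 < (K%:R^-1 : R) `^ tau by apply: powR_gt0; rewrite invr_gt0.
    by field; rewrite !gt_eqF.
  have Hpt : forall x : L.-tuple 'I_V, Num.min (lam * P x) (Qt x) =
      P x * Num.min lam (F * m1 (nth x0 x l1)).
    move=> x; rewrite /P /Qt /autoreg.
    case: (boolP [forall i : 'I_L, tnth x i \in S (take i x)]) => [/forallP Hall | /forallPn [i Hi]].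
      have eP : \prod_(i < L) Pc (take i x) (tnth x i) = \prod_(i < L) K%:R^-1.
        by apply: eq_bigr => i _; rewrite HP ?Hsz ?ltn_ord // Hall.
      have eQ : \prod_(i < L) temper tau Qc (take i x) (tnth x i) =
          \prod_(i < L) K%:R^-1 * \prod_(i < L) mfac i (tnth x i).
        by rewrite -big_split; apply: eq_bigr => i _; exact: Hfac (Hsz x i) (Hall i).
      have eM : \prod_(i < L) mfac i (tnth x i) = F * m1 (nth x0 x l1).
        rewrite (bigD1 l1) // (bigD1 l2) /=; last by rewrite eq_sym.
        rewrite big1; last first.
          by move=> j /andP[/negbTE h1 /negbTE h2]; rewrite /mfac h1 h2.
        rewrite /mfac eqxx eq_sym (negbTE hl12) eqxx mulr1 mulrC.
        by rewrite (tnth_nth x0).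
      rewrite eP eQ eM [in RHS]minr_pMr; first by rewrite mulrC.
      by apply: prodr_ge0 => j _; rewrite invr_ge0 ltW.
    have eP : \prod_(i < L) Pc (take i x) (tnth x i) = 0.
      by rewrite (bigD1 i) //= HP ?Hsz ?ltn_ord // (negbTE Hi) mul0r.
    rewrite eP mulr0 mul0r min_l //.
    by apply: prodr_ge0 => j _; exact: Tge0.
  rewrite /precision (eq_bigr _ (fun x _ => Hpt x)) /P.
  rewrite (@marg R V L Pc l1 x0 (fun v => if (v < K)%N then K%:R^-1 else 0) (fun v => Num.min lam (F * m1 v))); last first.
  - exact: ltn_ord.
  - by move=> c y hc; rewrite HP ?hc ?ltn_ord // HS1 // inE.
  - move=> c hc; under eq_bigr => y _ do rewrite HP //.
    by rewrite sumS HS // mulr0 addr0 mulfV // gt_eqF.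
  rewrite (eq_bigr (fun v : 'I_V => if (v < rK)%N then K%:R^-1 * Num.min lam lmax
      else if (v < K)%N then K%:R^-1 * Num.min lam lmin else 0)); last first.
    move=> v _; rewrite /m1; case hv1 : (v < rK)%N.
      by rewrite (leq_trans hv1 rKK) Emax.
    by case: ifP => _; rewrite ?Emin ?mul0r.
  rewrite sum3 // -hrK hKrK; field; by rewrite gt_eqF.
have r1' : 0 < 1 - rho by lra.
have lmaxF : F <= lmax.
  have : (1 - rho) * lmin <= (1 - rho) * lmax by rewrite ler_pM2l.
  lra.
have EGF : (1 - rho) * lmin = G * F by rewrite -Emin; field; rewrite gt_eqF.
split; [|split].
- move=> lam hl; have l0 : 0 < lam by lra.
  have Hp : precision lam P Qt = F.
    by rewrite Hkey // !min_r // (le_trans Hle hl).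
  by rewrite Hrec // Hp.
- move=> lam /andP[h1 h2] l0.
  have Hp : precision lam P Qt = rho * lam + G * F.
    by rewrite Hkey // min_l // min_r // EGF.
  split => //; rewrite Hrec // Hp; field; by rewrite gt_eqF.
- move=> lam l0 hl.
  have Hp : precision lam P Qt = lam.
    rewrite Hkey // !min_l ?(le_trans hl Hle) //; ring.
  by rewrite Hrec // Hp divff // gt_eqF.
Qed.
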